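(* Let $(F_n)$ be the Fibonacci sequence with $F_0=0$, $F_1=1$, $F_n=F_{n-1}+F_{n-2}$, extended by $F_{-1}=1$. For every integer $m\ge 0$, $$[\underbrace{11,11,\dots,11}_{m},\,3]=\frac{F_{5m+4}}{F_{5m-1}},$$ where the continued fraction has $m+1$ entries $a_0,\dots,a_m$ with $a_i=11$ for $0\le i<m$ and $a_m=3$.
   Context: For numbers $a_0,a_1,\dots,a_m$, the finite simple continued fraction $[a_0,a_1,\dots,a_m]$ denotes $a_0+\cfrac{1}{a_1+\cfrac{1}{\ddots+\cfrac{1}{a_m}}}$, evaluated as a rational number; $[a_0]=a_0$. *)

(* Defs.v *)
From mathcomp Require Import all_boot all_order all_algebra.
Set Implicit Arguments. Unset Strict Implicit. Unset Printing Implicit Defensive.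
Import Order.TTheory GRing.Theory Num.Theory.
Local Open Scope ring_scope.

Fixpoint fib (n : nat) : nat :=
  match n with
  | 0 => 0
  | 1 => 1
  | (k.+1 as n').+1 => fib n' + fib k
  end.

(* Fibonacci numbers extended to integer indices by the recurrence,
   F_{-n} = (-1)^(n+1) F_n; in particular F_{-1} = 1. *)
Definition fibz (k : int) : int :=
  match k with
  | Posz n => (fib n)%:Z
  | Negz n => (-1) ^+ n * (fib n.+1)%:Z  (* Negz n = -(n+1) *)
  end.

(* Finite simple continued fraction [a_0; a_1, ..., a_m] as a rational.
   The empty list is never used (value 0 by convention). *)
Fixpoint cfrac (s : seq rat) : rat :=
  match s with
  | [::] => 0
  | [:: a] => a
  | a :: s' => a + (cfrac s')^-1
  end.

(* Main.v *)
Require Import Defs.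
From mathcomp Require Import all_boot all_order all_algebra.
From mathcomp Require Import ring lra zify.
Import Order.TTheory GRing.Theory Num.Theory.
Local Open Scope ring_scope.

Lemma fibSS n : fib n.+2 = (fib n.+1 + fib n)%N.
Proof. by []. Qed.

Lemma fib10 k : fib (k + 10) = (11 * fib (k + 5) + fib k)%N.
Proof.
rewrite !addnS !addn0 !fibSS.
move: (fib k.+1) (fib k) => a b. lia.
Qed.

Lemma fib_pos n : (0 < fib n.+1)%N.
Proof.
suff: (0 < fib n.+1)%N /\ (0 < fib n.+2)%N by case.
elim: n => [//|n [H1 H2]]; split=> //.
by rewrite fibSS addn_gt0 H2.
Qed.

Lemma denE m : fibz ((5 * m)%N%:Z - 1) = (if m is 0 then 1 else fib (5 * m - 1))%N%:Z.
Proof.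
case: m => [//|m].
have -> : ((5 * m.+1)%N%:Z - 1 = (5 * m.+1 - 1)%N%:Z)%R.
  by rewrite subzn // muln_gt0.
by [].
Qed.

Lemma rcons_cons (a : rat) s x : rcons (a :: s) x = a :: rcons s x.
Proof. by []. Qed.

Lemma keyrec m : fib (5 * m.+1 + 4) = (11 * fib (5 * m + 4) + (if m is 0 then 1 else fib (5 * m - 1)))%N.
Proof.
case: m => [//|m].
have -> : (5 * m.+2 + 4 = (5 * m + 4) + 10)%N by lia.
have -> : (5 * m.+1 + 4 = (5 * m + 4) + 5)%N by lia.
have -> : (5 * m.+1 - 1 = 5 * m + 4)%N by lia.
exact: fib10.
Qed.

Lemma alg (A B : nat) : (0 < A)%N -> (0 < B)%N ->
  11%:R + ((A%:Z)%:~R / (B%:Z)%:~R : rat)^-1 = (((11 * A + B)%N)%:Z)%:~R / (A%:Z)%:~R.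
Proof.
move=> HA HB.
have hA : (A%:R : rat) != 0 by rewrite pnatr_eq0 -lt0n.
have hB : (B%:R : rat) != 0 by rewrite pnatr_eq0 -lt0n.
have E : forall n : nat, ((n%:Z)%:~R : rat) = n%:R by move=> n; rewrite pmulrn.
rewrite !E natrD natrM. field. by rewrite hA hB.
Qed.

Lemma fibzP n : fibz n%:Z = (fib n)%:Z.
Proof. by []. Qed.

Theorem theorem4 (m : nat) :
  cfrac (rcons (nseq m 11%:R) 3%:R) =
  (fibz (5 * m + 4)%N%:Z)%:~R / (fibz ((5 * m)%N%:Z - 1))%:~R.
Proof.
elim: m => [|m IH].
  by rewrite /= divr1.
have Hr : forall s, exists a s', rcons s (3%:R : rat) = a :: s'.
  by case=> [|a s]; [exists 3%:R, [::] | exists a, (rcons s 3%:R)].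
have [a [s' Hs]] := Hr (nseq m 11%:R).
have -> : nseq m.+1 (11%:R : rat) = 11%:R :: nseq m 11%:R by [].
rewrite rcons_cons Hs.
have -> : cfrac [:: 11%:R, a & s'] = 11%:R + (cfrac (a :: s'))^-1 by [].
rewrite -Hs IH !denE !fibzP.
have -> : (5 * m.+1 - 1 = 5 * m + 4)%N by lia.
rewrite keyrec.
have Apos : (0 < fib (5 * m + 4))%N.
  have -> : (5 * m + 4 = (5 * m + 3).+1)%N by lia. exact: fib_pos.
have Bpos : (0 < (if m is 0 then 1 else fib (5 * m - 1)))%N.
  case: (m) => [//|k]. have -> : (5 * k.+1 - 1 = (5 * k + 3).+1)%N by lia. exact: fib_pos.
exact: alg.
Qed.
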